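(* For any $M\in\mathrm{SL}(3,\mathbb R)$ we have $\mathcal G_{\mathbb S_1^1}(M)\le5$.
   Context: Here $d=2$ and $\mathbb S_1^1$ is the unit circle in $\mathbb R^2$. Elements of $\mathbb R^{3}$ are row vectors $(u,\vec v)$ with $u\in\mathbb R$, $\vec v\in\mathbb R^2$; $\mathbb Z^{3}M$ is the lattice of row vectors $\vec mM$, $\vec m\in\mathbb Z^3$. For $\mathcal D\subseteq\mathbb S_1^{1}$ and $t\in(0,1)$, $\mathcal Q_{\mathcal D}(M,t)=\{(u,\vec v)\in\mathbb Z^{3}M : -t<u<1-t,\ \vec v\in\mathbb R_{>0}\mathcal D\}$, $F_{\mathcal D}(M,t)=\min\{|\vec v| : (u,\vec v)\in\mathcal Q_{\mathcal D}(M,t)\}$, and $\mathcal G_{\mathcal D}(M)=|\{F_{\mathcal D}(M,t):0<t<1\}|$. For $\mathcal D=\mathbb S_1^1$ one has $\mathbb R_{>0}\mathcal D=\mathbb R^2\setminus\{0\}$. *)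

(* Defs.v *)
From HB Require Import structures.
From mathcomp Require Import all_boot all_order all_algebra.
From mathcomp Require Import all_classical all_reals.
Set Implicit Arguments. Unset Strict Implicit. Unset Printing Implicit Defensive.
Import Order.TTheory GRing.Theory Num.Theory.
Local Open Scope ring_scope.
Local Open Scope classical_set_scope.

Definition lattice (R : realType) (M : 'M[R]_3) : set 'rV[R]_3 :=
  [set x | exists m : 'rV[int]_3, x = map_mx (fun z : int => z%:~R) m *m M].

(* A row vector x = (u, v) with u = x_0 and v = (x_1, x_2) in R^2. *)
Definition ucoord (R : realType) (x : 'rV[R]_3) : R := x ord0 (inord 0).
Definition vnorm (R : realType) (x : 'rV[R]_3) : R :=
  Num.sqrt (x ord0 (inord 1) ^+ 2 + x ord0 (inord 2) ^+ 2).
Definition v_nonzero (R : realType) (x : 'rV[R]_3) : Prop :=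
  x ord0 (inord 1) <> 0 \/ x ord0 (inord 2) <> 0.

Definition Qset (R : realType) (M : 'M[R]_3) (t : R) : set 'rV[R]_3 :=
  [set x | lattice M x /\ - t < ucoord x < 1 - t /\ v_nonzero x].

Definition is_F (R : realType) (M : 'M[R]_3) (t r : R) : Prop :=
  (exists2 x, Qset M t x & vnorm x = r) /\
  (forall x, Qset M t x -> r <= vnorm x).

(* The set {F_{S^1}(M,t) : 0 < t < 1}; G_{S^1}(M) is its cardinality. *)
Definition Fvalues (R : realType) (M : 'M[R]_3) : set R :=
  [set r | exists t, 0 < t < 1 /\ is_F M t r].

(* Main.v *)
Require Import Defs.
From HB Require Import structures.
From mathcomp Require Import all_boot all_order all_algebra.
From mathcomp Require Import all_classical all_reals.
From mathcomp Require Import trigo finmap.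
From mathcomp Require Import ring lra.
Import Order.TTheory GRing.Theory Num.Theory.
Local Open Scope ring_scope.

Module Aux.
Set Implicit Arguments. Unset Strict Implicit. Unset Printing Implicit Defensive.

Section Geo2.
Variable R : realType.
Local Notation pi := (@pi R).

Lemma cos_pi3 : cos (pi / 3) = 1 / 2 :> R.
Proof.
set x := pi / 3.
have h3 : pi = x + x + x by rewrite /x; field.
have hc : cos pi = -1 := cospi R.
rewrite h3 !cosD !sinD in hc.
have hs := cos2Dsin2 x.
have cpos : 0 < cos x.
  apply: cos_gt0_pihalf; rewrite /x; have := pi_gt0 R; move=> p0; apply/andP; split; lra.
set c := cos x in hc hs cpos *; set s := sin x in hc hs *.
have e : (c + 1) * (2 * c - 1) ^+ 2 = 0.
  have -> : (c + 1) * (2 * c - 1) ^+ 2 = 4 * c ^+ 3 - 3 * c + 1 by ring.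
  have hs' : s ^+ 2 = 1 - c ^+ 2 by lra.
  have -> : 4 * c ^+ 3 - 3 * c + 1 = (c * c - s * s) * c - (s * c + c * s) * s + 1.
    rewrite -!expr2.
    have -> : (s * c + c * s) * s = 2 * c * s ^+ 2 by ring.
    rewrite hs'; ring.
  rewrite hc; ring.
move/eqP: e; rewrite mulf_eq0 => /orP[/eqP e|]; first by lra.
by rewrite sqrf_eq0 subr_eq0 => /eqP e; lra.
Qed.

Lemma pi3_in : pi / 3 \in `[0, pi].
Proof. have := pi_gt0 R => p0; rewrite in_itv /=; apply/andP; split; lra. Qed.

Lemma cos_lt_half (d : R) : 0 <= d <= pi -> cos d < 1/2 -> pi / 3 < d.
Proof.
move=> hd h; have hd' : d \in `[0, pi] by rewrite in_itv.
by rewrite -(ltr_cos pi3_in hd') cos_pi3.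
Qed.

Lemma same_gap (x y : R) : 0 <= x <= pi -> 0 <= y <= pi ->
  cos (x - y) < 1/2 -> pi / 3 < `|x - y|.
Proof.
move=> /andP[x0 xp] /andP[y0 yp]; rewrite -cos_norm => h.
apply: cos_lt_half => //; apply/andP; split => //.
by rewrite ler_norml; apply/andP; split; lra.
Qed.

Lemma opp_gap (x y : R) : 0 <= x <= pi -> 0 <= y <= pi ->
  cos (x + y) < 1/2 -> x + y < pi * 5 / 3.
Proof.
move=> /andP[x0 xp] /andP[y0 yp] h.
have p0 := pi_gt0 R.
case: (leP (x + y) pi) => hxy; first by lra.
have e : cos (x + y) = cos (pi *+ 2 - (x + y)).
  have -> : pi *+ 2 - (x + y) = - ((x + y) - pi *+ 2) by ring.
  by rewrite cosN -(cosD2pi (x + y - pi *+ 2)); congr cos; ring.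
rewrite e in h.
have H : 0 <= pi *+ 2 - (x + y) <= pi by rewrite mulr2n; apply/andP; split; lra.
have := cos_lt_half H h; rewrite mulr2n; lra.
Qed.

Lemma sum_lt_pi (x y : R) : 0 <= x <= pi -> 0 <= y <= pi ->
  x + y < pi -> 0 < cos x + cos y.
Proof.
move=> hx /andP[y0 yp] h.
have e : cos (pi - y) = - cos y by rewrite cosB (cospi R) (sinpi R); ring.
have : cos (pi - y) < cos x.
  rewrite ltr_cos //; first lra.
  by rewrite in_itv /=; apply/andP; split; lra.
rewrite e; lra.
Qed.

Lemma acos_rep (c s : R) : c ^+ 2 + s ^+ 2 = 1 ->
  [/\ 0 <= acos c <= pi, cos (acos c) = c & sin (acos c) = `|s|].
Proof.
move=> h.
have hc : -1 <= c <= 1.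
  have : c ^+ 2 <= 1 by have := sqr_ge0 s; lra.
  rewrite expr2 => h2; apply/andP; split; nra.
split; first by apply/andP; split; [exact: acos_ge0|exact: acos_lepi].
  by rewrite acosK // in_itv.
rewrite sin_acos // -sqrtr_sqr; congr Num.sqrt; lra.
Qed.


Lemma same_cos (ci si cj sj : R) : ci ^+ 2 + si ^+ 2 = 1 -> cj ^+ 2 + sj ^+ 2 = 1 ->
  0 <= si * sj -> cos (acos ci - acos cj) = ci * cj + si * sj.
Proof.
move=> hi hj h; have [_ ci' si'] := acos_rep hi; have [_ cj' sj'] := acos_rep hj.
by rewrite cosB ci' cj' si' sj' -normrM ger0_norm.
Qed.

Lemma opp_cos (ci si cj sj : R) : ci ^+ 2 + si ^+ 2 = 1 -> cj ^+ 2 + sj ^+ 2 = 1 ->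
  si * sj <= 0 -> cos (acos ci + acos cj) = ci * cj + si * sj.
Proof.
move=> hi hj h; have [_ ci' si'] := acos_rep hi; have [_ cj' sj'] := acos_rep hj.
by rewrite cosD ci' cj' si' sj' -normrM ler0_norm // opprK.
Qed.

Lemma PH3 (p x y z : R) : p / 3 < x <= p -> p / 3 < y <= p -> p / 3 < z <= p ->
  p / 3 < `|x - y| -> p / 3 < `|y - z| -> p / 3 < `|x - z| -> False.
Proof.
move=> /andP[? ?] /andP[? ?] /andP[? ?].
rewrite !ltr_normr => /orP[?|?] /orP[?|?] /orP[?|?]; lra.
Qed.

Lemma PH22 (p a a' b b' : R) : p / 3 < a <= p -> p / 3 < a' <= p ->
  p / 3 < b <= p -> p / 3 < b' <= p ->
  p / 3 < `|a - a'| -> p / 3 < `|b - b'| ->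
  a + b < p * 5 / 3 -> a + b' < p * 5 / 3 -> a' + b < p * 5 / 3 -> a' + b' < p * 5 / 3 ->
  [\/ a + b < p, a + b' < p, a' + b < p | a' + b' < p].
Proof.
move=> /andP[? ?] /andP[? ?] /andP[? ?] /andP[? ?].
rewrite !ltr_normr => /orP[?|?] /orP[?|?] ? ? ? ?.
- by apply: Or44; lra.
- by apply: Or43; lra.
- by apply: Or42; lra.
- by apply: Or41; lra.
Qed.

Lemma pigeon (p : R) (ps : nat -> R) (s : nat -> bool) :
  (forall k, (0 < k <= 4)%N -> p / 3 < ps k <= p) ->
  (forall i j, (0 < i <= 4)%N -> (0 < j <= 4)%N -> i != j -> s i = s j ->
     p / 3 < `|ps i - ps j|) ->
  (forall i j, (0 < i <= 4)%N -> (0 < j <= 4)%N -> s i != s j ->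
     ps i + ps j < p * 5 / 3) ->
  exists i j, [/\ (0 < i <= 4)%N, (0 < j <= 4)%N, s i != s j & ps i + ps j < p].
Proof.
move=> Hr Hs Ho.
have r1 := Hr 1%N isT; have r2 := Hr 2%N isT; have r3 := Hr 3%N isT; have r4 := Hr 4%N isT.
pose ph3 i j k := (p / 3 < `|ps i - ps j|) /\ (p / 3 < `|ps j - ps k|) /\ (p / 3 < `|ps i - ps k|).
have P3 : forall i j k, (0 < i <= 4)%N -> (0 < j <= 4)%N -> (0 < k <= 4)%N ->
   i != j -> j != k -> i != k -> s i = s j -> s j = s k -> False.
  move=> i j k hi hj hk ij jk ik sij sjk.
  apply: (PH3 (Hr i hi) (Hr j hj) (Hr k hk)).
  - exact: Hs.
  - exact: Hs.
  - by apply: Hs => //; rewrite sij.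
have P22 : forall a a' b b', (0 < a <= 4)%N -> (0 < a' <= 4)%N ->
   (0 < b <= 4)%N -> (0 < b' <= 4)%N -> a != a' -> b != b' ->
   s a = s a' -> s b = s b' -> s a != s b ->
   exists i j, [/\ (0 < i <= 4)%N, (0 < j <= 4)%N, s i != s j & ps i + ps j < p].
  move=> a a' b b' ha ha' hb hb' aa bb saa sbb sab.
  have sab' : s a != s b' by rewrite -sbb.
  have sa'b : s a' != s b by rewrite -saa.
  have sa'b' : s a' != s b' by rewrite -saa -sbb.
  case: (PH22 (Hr a ha) (Hr a' ha') (Hr b hb) (Hr b' hb') (Hs _ _ ha ha' aa saa)
     (Hs _ _ hb hb' bb sbb) (Ho _ _ ha hb sab) (Ho _ _ ha hb' sab')
     (Ho _ _ ha' hb sa'b) (Ho _ _ ha' hb' sa'b')) => h.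
  - by exists a, b.
  - by exists a, b'.
  - by exists a', b.
  - by exists a', b'.
case E1: (s 1%N); case E2: (s 2%N); case E3: (s 3%N); case E4: (s 4%N);
  first [ by exfalso; apply: (P3 1%N 2%N 3%N); rewrite ?E1 ?E2 ?E3 ?E4
        | by exfalso; apply: (P3 1%N 2%N 4%N); rewrite ?E1 ?E2 ?E3 ?E4
        | by exfalso; apply: (P3 1%N 3%N 4%N); rewrite ?E1 ?E2 ?E3 ?E4
        | by exfalso; apply: (P3 2%N 3%N 4%N); rewrite ?E1 ?E2 ?E3 ?E4
        | by apply: (P22 1%N 2%N 3%N 4%N); rewrite ?E1 ?E2 ?E3 ?E4
        | by apply: (P22 1%N 3%N 2%N 4%N); rewrite ?E1 ?E2 ?E3 ?E4
        | by apply: (P22 1%N 4%N 2%N 3%N); rewrite ?E1 ?E2 ?E3 ?E4 ].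
Qed.

Lemma lemA (A B q ca cb sa sb : R) :
  0 < q -> q < A -> q < B -> B <= A ->
  ca ^+ 2 + sa ^+ 2 = 1 -> cb ^+ 2 + sb ^+ 2 = 1 ->
  ca < 1/2 -> cb < 1/2 -> 0 <= ca + cb -> sa * sb <= 0 ->
  (A * ca + B * cb - q) ^+ 2 + (A * sa + B * sb) ^+ 2 < A ^+ 2.
Proof.
move=> q0 qA qB BA hca hcb ca2 cb2 cab sab.
have cagt : - (1/2) < ca by lra.
have cbgt : - (1/2) < cb by lra.
have P0 : 0 <= (1 - ca) * (1 - cb) by clear -ca2 cb2; nra.
have Q2 : (sa * sb) ^+ 2 = (1 - ca ^+ 2) * (1 - cb ^+ 2).
  have -> : 1 - ca ^+ 2 = sa ^+ 2 by lra.
  have -> : 1 - cb ^+ 2 = sb ^+ 2 by lra.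
  by rewrite exprMn.
have PQ : ((1 - ca) * (1 - cb)) ^+ 2 <= (sa * sb) ^+ 2.
  rewrite Q2; clear -P0 cab ca2 cb2 cagt cbgt; nra.
have h1 : (1 - ca) * (1 - cb) <= - (sa * sb).
  move: PQ P0 sab; set P := (1 - ca) * (1 - cb); set Q := sa * sb.
  rewrite !expr2 => PQ P0 sab; clear -PQ P0 sab; nra.
set C := ca * cb + sa * sb.
have hC1 : C <= ca + cb - 1 by rewrite /C; clear -h1; nra.
have sa2 : 3/4 < sa ^+ 2 by clear -hca cagt ca2; nra.
have sb2 : 3/4 < sb ^+ 2 by clear -hcb cbgt cb2; nra.
have hss : 9/16 < (sa * sb) ^+ 2.
  have ha : 0 < sa ^+ 2 - 3/4 by lra.
  have hb : 0 < sb ^+ 2 - 3/4 by lra.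
  have := mulr_gt0 ha hb.
  rewrite exprMn; nra.
have hss' : sa * sb < - (3/4).
  move: hss sab; set p := sa * sb => hss sab; rewrite expr2 in hss.
  clear -hss sab; nra.
have cc : ca * cb < 1/4 by clear -cagt cbgt ca2 cb2; nra.
have hC2 : C < - (1/2) by rewrite /C; lra.
have B0 : 0 < B by lra.
have G0 : B ^+ 2 + 2 * A * B * C < 0.
  have : 0 < A * B by apply: mulr_gt0; lra.
  move=> AB; clear -AB hC2 BA B0; nra.
have GB : 2 * B ^+ 2 - 2 * B * (A * ca + B * cb) + 2 * A * B * C <= 0.
  have h : A * C - A * ca <= A * (cb - 1) by clear -hC1 qA q0; nra.
  have h' : (1 - cb) * (B - A) <= 0 by clear -cb2 BA; nra.
  clear -h h' B0; nra.
have E : (A * ca + B * cb - q) ^+ 2 + (A * sa + B * sb) ^+ 2 - A ^+ 2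
   - (B ^+ 2 + q ^+ 2 + 2 * A * B * C - 2 * q * (A * ca + B * cb))
   = A ^+ 2 * (ca ^+ 2 + sa ^+ 2 - 1) + B ^+ 2 * (cb ^+ 2 + sb ^+ 2 - 1).
  by rewrite /C; ring.
rewrite hca hcb subrr !mulr0 addr0 in E.
have key : B * (B ^+ 2 + q ^+ 2 + 2 * A * B * C - 2 * q * (A * ca + B * cb))
  = (B - q) * (B ^+ 2 + 2 * A * B * C)
    + q * (2 * B ^+ 2 - 2 * B * (A * ca + B * cb) + 2 * A * B * C)
    - q * B * (B - q) by ring.
have k1 : (B - q) * (B ^+ 2 + 2 * A * B * C) < 0.
  by rewrite pmulr_rlt0 // subr_gt0.
have k2 : q * (2 * B ^+ 2 - 2 * B * (A * ca + B * cb) + 2 * A * B * C) <= 0.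
  by rewrite pmulr_rle0.
have k3 : 0 <= q * B * (B - q).
  by apply: mulr_ge0; [apply: mulr_ge0; lra | lra].
have : B * (B ^+ 2 + q ^+ 2 + 2 * A * B * C - 2 * q * (A * ca + B * cb)) < 0.
  by rewrite key; lra.
rewrite pmulr_rlt0 // => H.
move/eqP: E; rewrite subr_eq0 => /eqP E.
lra.
Qed.

Lemma same_sign (x y : R) : (0 <= x) = (0 <= y) -> 0 <= x * y.
Proof.
case: (leP 0 x) => a; case: (leP 0 y) => b //= _.
  exact: mulr_ge0.
by apply: ltW; rewrite nmulr_rgt0.
Qed.

Lemma opp_sign (x y : R) : (0 <= x) != (0 <= y) -> x * y <= 0.
Proof.
case: (leP 0 x) => a; case: (leP 0 y) => b //= _.
  by apply: mulr_ge0_le0 => //; apply: ltW.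
by apply: mulr_le0_ge0 => //; apply: ltW.
Qed.

Lemma GLn (n0 m : R) (P Q n : nat -> R) :
  0 < n0 ->
  (forall k, (0 < k <= 4)%N -> [/\ n0 < n k, n k < m & n k ^+ 2 = P k ^+ 2 + Q k ^+ 2]) ->
  (forall k, (0 < k <= 4)%N -> m ^+ 2 <= (P k - n0) ^+ 2 + Q k ^+ 2) ->
  (forall i j, (0 < i <= 4)%N -> (0 < j <= 4)%N -> i != j ->
     m ^+ 2 <= (P i - P j) ^+ 2 + (Q i - Q j) ^+ 2) ->
  (forall i j, (0 < i <= 4)%N -> (0 < j <= 4)%N -> i != j ->
     (P i + P j - n0 = 0 /\ Q i + Q j = 0) \/
     (n i ^+ 2 <= (P i + P j - n0) ^+ 2 + (Q i + Q j) ^+ 2 /\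
      n j ^+ 2 <= (P i + P j - n0) ^+ 2 + (Q i + Q j) ^+ 2)) ->
  False.
Proof.
move=> n00 Hn H0 Hp Ht.
pose c k := P k / n k.
pose sg k := Q k / n k.
pose ps k := acos (c k).
pose s k := (0 <= sg k).
have npos : forall k, (0 < k <= 4)%N -> 0 < n k.
  by move=> k hk; have [h _ _] := Hn k hk; lra.
have hP : forall k, (0 < k <= 4)%N -> P k = n k * c k.
  by move=> k hk; rewrite /c mulrC divfK //; have := npos k hk; rewrite lt0r => /andP[].
have hQ : forall k, (0 < k <= 4)%N -> Q k = n k * sg k.
  by move=> k hk; rewrite /sg mulrC divfK //; have := npos k hk; rewrite lt0r => /andP[].
have hcs : forall k, (0 < k <= 4)%N -> c k ^+ 2 + sg k ^+ 2 = 1.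
  move=> k hk; have [_ _ e] := Hn k hk; have np := npos k hk.
  have : n k ^+ 2 * (c k ^+ 2 + sg k ^+ 2) = n k ^+ 2 * 1.
    by rewrite mulr1 [in RHS]e (hP k hk) (hQ k hk); ring.
  by move/mulfI; apply; rewrite expf_neq0 // gt_eqF.
have hc : forall k, (0 < k <= 4)%N -> c k < 1 / 2.
  move=> k hk; have [h1 h2 e] := Hn k hk; have np := npos k hk; have h0 := H0 k hk.
  have hm : n k ^+ 2 < m ^+ 2 by rewrite ltr_pXn2r // ?nnegrE; lra.
  have e2 : (P k - n0) ^+ 2 + Q k ^+ 2 = n k ^+ 2 - 2 * n0 * P k + n0 ^+ 2.
    by rewrite e; ring.
  have h3 : 2 * P k < n0.
    have h4 : n0 * (2 * P k) < n0 * n0 by lra.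
    by rewrite ltr_pM2l in h4.
  have h5 : 2 * (n k * c k) < n k by rewrite -(hP k hk); lra.
  have : 2 * c k < 1.
    have h6 : n k * (2 * c k) < n k * 1 by lra.
    by rewrite ltr_pM2l in h6.
  lra.
have hdot : forall i j, (0 < i <= 4)%N -> (0 < j <= 4)%N -> i != j ->
    c i * c j + sg i * sg j < 1 / 2.
  move=> i j hi hj ij.
  have [a1 a2 ea] := Hn i hi; have [b1 b2 eb] := Hn j hj.
  have ni := npos i hi; have nj := npos j hj; have h := Hp i j hi hj ij.
  have hmi : n i ^+ 2 < m ^+ 2 by rewrite ltr_pXn2r // ?nnegrE; lra.
  have hmj : n j ^+ 2 < m ^+ 2 by rewrite ltr_pXn2r // ?nnegrE; lra.
  have hD : 2 * (n i * n j) * (c i * c j + sg i * sg j) < n i * n j.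
    have eD : n i * n j * (c i * c j + sg i * sg j) = P i * P j + Q i * Q j.
      by rewrite (hP i hi) (hP j hj) (hQ i hi) (hQ j hj); ring.
    rewrite -mulrA eD.
    have e1 : (P i - P j) ^+ 2 + (Q i - Q j) ^+ 2
        = n i ^+ 2 + n j ^+ 2 - 2 * (P i * P j + Q i * Q j) by rewrite ea eb; ring.
    rewrite e1 in h.
    have hh1 : 2 * (P i * P j + Q i * Q j) < n i ^+ 2 by lra.
    have hh2 : 2 * (P i * P j + Q i * Q j) < n j ^+ 2 by lra.
    case: (leP (n i) (n j)) => hij.
      by apply: (lt_le_trans hh1); rewrite expr2 ler_pM2l.
    by apply: (lt_le_trans hh2); rewrite expr2 ler_pM2r //; lra.
  have nn : 0 < n i * n j by apply: mulr_gt0.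
  move: hD; set X := c i * c j + sg i * sg j => hD.
  have : 2 * X < 1.
    by rewrite -(ltr_pM2l nn) mulr1; lra.
  lra.
have hps : forall k, (0 < k <= 4)%N -> [/\ 0 <= ps k <= pi, cos (ps k) = c k & pi / 3 < ps k].
  move=> k hk; have [h1 h2 _] := acos_rep (hcs k hk).
  by split => //; apply: cos_lt_half => //; rewrite h2; apply: hc.
have [i [j [hi hj sij hsum]]] : exists i j,
    [/\ (0 < i <= 4)%N, (0 < j <= 4)%N, s i != s j & ps i + ps j < pi].
  apply: pigeon.
  - move=> k hk; have [/andP[_ h1] _ h3] := hps k hk; by rewrite h1 andbT.
  - move=> i j hi hj ij sij.
    have [ri _ _] := hps i hi; have [rj _ _] := hps j hj.
    apply: same_gap => //.
    rewrite (same_cos (hcs i hi) (hcs j hj) (same_sign sij)); exact: hdot.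
  - move=> i j hi hj sij.
    have [ri _ _] := hps i hi; have [rj _ _] := hps j hj.
    apply: opp_gap => //.
    rewrite (opp_cos (hcs i hi) (hcs j hj) (opp_sign sij)).
    by apply: hdot => //; apply/eqP => ij; move: sij; rewrite ij eqxx.
have [ri ci _] := hps i hi; have [rj cj _] := hps j hj.
have cpos : 0 < c i + c j by rewrite -ci -cj; apply: sum_lt_pi.
have ij : i != j by apply/eqP => e; move: sij; rewrite e eqxx.
have ssn : sg i * sg j <= 0 := opp_sign sij.
have [a1 a2 ea] := Hn i hi; have [b1 b2 eb] := Hn j hj.
have eP : P i + P j - n0 = n i * c i + n j * c j - n0 by rewrite (hP i hi) (hP j hj).
have eQ : Q i + Q j = n i * sg i + n j * sg j by rewrite (hQ i hi) (hQ j hj).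
case: (Ht i j hi hj ij) => [[z1 z2]|[t1 t2]].
  have := H0 i hi.
  have -> : P i - n0 = - P j by lra.
  have -> : Q i = - Q j by lra.
  rewrite !sqrrN -eb.
  have : n j ^+ 2 < m ^+ 2 by rewrite ltr_pXn2r // ?nnegrE; lra.
  lra.
rewrite eP eQ in t1 t2.
case: (leP (n j) (n i)) => hle.
  have := lemA n00 a1 b1 hle (hcs i hi) (hcs j hj) (hc i hi) (hc j hj) (ltW cpos) ssn.
  lra.
have hle' : n i <= n j by lra.
have cpos' : 0 <= c j + c i by lra.
have ssn' : sg j * sg i <= 0 by rewrite mulrC.
have := lemA n00 b1 a1 hle' (hcs j hj) (hcs i hi) (hc j hj) (hc i hi) cpos' ssn'.
have -> : n j * c j + n i * c i - n0 = n i * c i + n j * c j - n0 by ring.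
have -> : n j * sg j + n i * sg i = n i * sg i + n j * sg j by ring.
lra.
Qed.


Lemma GL (m : R) (P Q n : nat -> R) :
  0 < n 0%N -> n 0%N ^+ 2 = P 0%N ^+ 2 + Q 0%N ^+ 2 ->
  (forall k, (0 < k <= 4)%N ->
     [/\ n 0%N < n k, n k < m & n k ^+ 2 = P k ^+ 2 + Q k ^+ 2]) ->
  (forall i j, (i <= 4)%N -> (j <= 4)%N -> i != j ->
     m ^+ 2 <= (P i - P j) ^+ 2 + (Q i - Q j) ^+ 2) ->
  (forall i j, (0 < i <= 4)%N -> (0 < j <= 4)%N -> i != j ->
     (P i + P j - P 0%N = 0 /\ Q i + Q j - Q 0%N = 0) \/
     (n i ^+ 2 <= (P i + P j - P 0%N) ^+ 2 + (Q i + Q j - Q 0%N) ^+ 2 /\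
      n j ^+ 2 <= (P i + P j - P 0%N) ^+ 2 + (Q i + Q j - Q 0%N) ^+ 2)) ->
  False.
Proof.
move=> n0p e0 Hn Hp Ht.
set n0 := n 0%N in n0p e0 Hn Hp Ht *.
set P0 := P 0%N in e0 Hp Ht *.
set Q0 := Q 0%N in e0 Hp Ht *.
have n0nz : n0 != 0 by rewrite gt_eqF.
pose rP a b := (a * P0 + b * Q0) / n0.
pose rQ a b := (P0 * b - Q0 * a) / n0.
have rN : forall a b, rP a b ^+ 2 + rQ a b ^+ 2 = a ^+ 2 + b ^+ 2.
  move=> a b; rewrite /rP /rQ.
  have -> : ((a * P0 + b * Q0) / n0) ^+ 2 + ((P0 * b - Q0 * a) / n0) ^+ 2
     = (a ^+ 2 + b ^+ 2) * (P0 ^+ 2 + Q0 ^+ 2) / n0 ^+ 2 by field.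
  by rewrite -e0 mulfK // expf_neq0.
have r0 : forall a b, a = 0 -> b = 0 -> rP a b = 0 /\ rQ a b = 0.
  by move=> a b -> ->; rewrite /rP /rQ; split; field.
pose P' k := rP (P k) (Q k).
pose Q' k := rQ (P k) (Q k).
have eP0 : rP P0 Q0 = n0 by rewrite /rP -!expr2 -e0 expr2 mulfK.
have eQ0 : rQ P0 Q0 = 0 by rewrite /rQ [P0 * Q0]mulrC subrr mul0r.
apply: (@GLn n0 m P' Q' n n0p).
- move=> k hk; have [h1 h2 h3] := Hn k hk; split => //.
  by rewrite /P' /Q' rN.
- move=> k hk.
  have -> : P' k - n0 = rP (P k - P0) (Q k - Q0) by rewrite -[in LHS]eP0 /P' /rP; field.
  have -> : Q' k = rQ (P k - P0) (Q k - Q0) by rewrite /Q' /rQ; field.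
  rewrite rN; apply: Hp => //; first by case/andP: hk.
  by case/andP: hk; case: k.
- move=> i j hi hj ij.
  have -> : P' i - P' j = rP (P i - P j) (Q i - Q j) by rewrite /P' /rP; field.
  have -> : Q' i - Q' j = rQ (P i - P j) (Q i - Q j) by rewrite /Q' /rQ; field.
  rewrite rN; apply: Hp => //; [by case/andP: hi | by case/andP: hj].
- move=> i j hi hj ij.
  have -> : P' i + P' j - n0 = rP (P i + P j - P0) (Q i + Q j - Q0).
    by rewrite -[in LHS]eP0 /P' /rP; field.
  have -> : Q' i + Q' j = rQ (P i + P j - P0) (Q i + Q j - Q0).
    by rewrite /Q' /rQ; field.
  case: (Ht i j hi hj ij) => [[z1 z2]|[t1 t2]]; first by left; apply: r0.
  by right; rewrite rN.
Qed.

End Geo2.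

Local Open Scope classical_set_scope.
Section Lat.
Variable R : realType.
Variable M : 'M[R]_3.

Definition V1 (x : 'rV[R]_3) := x ord0 (inord 1).
Definition V2 (x : 'rV[R]_3) := x ord0 (inord 2).

Lemma lattice_add x y : lattice M x -> lattice M y -> lattice M (x + y).
Proof.
move=> [a ->] [b ->]; exists (a + b).
rewrite -mulmxDl; congr (_ *m _); apply/matrixP => i j; rewrite !mxE.
by rewrite intrD.
Qed.

Lemma lattice_opp x : lattice M x -> lattice M (- x).
Proof.
move=> [a ->]; exists (- a).
rewrite -mulNmx; congr (_ *m _); apply/matrixP => i j; rewrite !mxE.
by rewrite intrN.
Qed.

Lemma lattice_sub x y : lattice M x -> lattice M y -> lattice M (x - y).
Proof. by move=> hx hy; apply: lattice_add => //; apply: lattice_opp. Qed.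

Lemma uD (x y : 'rV[R]_3) : ucoord (x + y) = ucoord x + ucoord y. Proof. by rewrite /ucoord mxE. Qed.
Lemma uN (x : 'rV[R]_3) : ucoord (- x) = - ucoord x. Proof. by rewrite /ucoord mxE. Qed.
Lemma V1D (x y : 'rV[R]_3) : V1 (x + y) = V1 x + V1 y. Proof. by rewrite /V1 mxE. Qed.
Lemma V1N (x : 'rV[R]_3) : V1 (- x) = - V1 x. Proof. by rewrite /V1 mxE. Qed.
Lemma V2D (x y : 'rV[R]_3) : V2 (x + y) = V2 x + V2 y. Proof. by rewrite /V2 mxE. Qed.
Lemma V2N (x : 'rV[R]_3) : V2 (- x) = - V2 x. Proof. by rewrite /V2 mxE. Qed.

Lemma vnorm_ge0 (x : 'rV[R]_3) : 0 <= vnorm x. Proof. exact: sqrtr_ge0. Qed.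

Lemma vnorm2 (x : 'rV[R]_3) : vnorm x ^+ 2 = V1 x ^+ 2 + V2 x ^+ 2.
Proof. by rewrite /vnorm sqr_sqrtr // addr_ge0 // sqr_ge0. Qed.

Lemma vnormN (x : 'rV[R]_3) : vnorm (- x) = vnorm x.
Proof. by rewrite /vnorm !mxE !sqrrN. Qed.

Lemma vnz_N (x : 'rV[R]_3) : v_nonzero x -> v_nonzero (- x).
Proof.
by rewrite /v_nonzero !mxE => -[h|h]; [left|right]; move=> /eqP; rewrite oppr_eq0 => /eqP.
Qed.

Lemma vnorm_gt0 (x : 'rV[R]_3) : v_nonzero x -> 0 < vnorm x.
Proof.
move=> h; rewrite /vnorm sqrtr_gt0.
case: h => h.
  have : 0 < x ord0 (inord 1) ^+ 2 by rewrite exprn_even_gt0 //; apply/eqP.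
  by have := sqr_ge0 (x ord0 (inord 2)); lra.
have : 0 < x ord0 (inord 2) ^+ 2 by rewrite exprn_even_gt0 //; apply/eqP.
by have := sqr_ge0 (x ord0 (inord 1)); lra.
Qed.

Lemma vnz_dec (x : 'rV[R]_3) : v_nonzero x \/ (V1 x = 0 /\ V2 x = 0).
Proof.
rewrite /v_nonzero /V1 /V2.
case: (eqVneq (x ord0 (inord 1)) 0) => h1; last by left; left; apply/eqP.
case: (eqVneq (x ord0 (inord 2)) 0) => h2; last by left; right; apply/eqP.
by right.
Qed.

Lemma half (r : R) : Fvalues M r -> exists s w,
  [/\ 1/2 <= s < 1, lattice M w, 0 <= ucoord w < s, v_nonzero w & vnorm w = r] /\
      (forall y, lattice M y -> 0 <= ucoord y < s -> v_nonzero y -> r <= vnorm y).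
Proof.
move=> [t [/andP[t0 t1] [[x Qx vx] Hmin]]]; case: Qx => Lx [/andP[ux1 ux2] nzx].
pose s := if t <= 1/2 then 1 - t else t.
have hs : 1/2 <= s < 1 by rewrite /s; case: ifP => h; apply/andP; split; lra.
have hs2 : 1 - t <= s /\ t <= s by rewrite /s; case: ifP => h; split; lra.
have hs3 : forall u, 0 <= u < s -> u < 1 - t \/ u < t.
  move=> u /andP[u0 us]; rewrite /s in us; move: us; case: ifP => h us.
    by left.
  by right.
exists s.
case: (leP 0 (ucoord x)) => hux.
- exists x; split; first split => //.
  + by apply/andP; split => //; lra.
  + move=> y Ly /andP[uy0 uys] nzy.
    have [h|h] : ucoord y < 1 - t \/ ucoord y < t by apply: hs3; rewrite uy0 uys.
    * by apply: Hmin; split => //; split => //; apply/andP; split; lra.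
    * rewrite -vnormN; apply: Hmin; split; first exact: lattice_opp.
      split; last exact: vnz_N.
      by rewrite uN; apply/andP; split; lra.
- exists (- x); split; first split => //.
  + exact: lattice_opp.
  + by rewrite uN; apply/andP; split; lra.
  + exact: vnz_N.
  + by rewrite vnormN.
  + move=> y Ly /andP[uy0 uys] nzy.
    have [h|h] : ucoord y < 1 - t \/ ucoord y < t by apply: hs3; rewrite uy0 uys.
    * by apply: Hmin; split => //; split => //; apply/andP; split; lra.
    * rewrite -vnormN; apply: Hmin; split; first exact: lattice_opp.
      split; last exact: vnz_N.
      by rewrite uN; apply/andP; split; lra.
Qed.


Lemma vnorm_eqV (x y : 'rV[R]_3) : V1 x = V1 y -> V2 x = V2 y -> vnorm x = vnorm y.
Proof. by rewrite /vnorm /V1 /V2 => -> ->. Qed.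

Lemma sq_le (a b : R) : 0 <= a -> a <= b -> a ^+ 2 <= b ^+ 2.
Proof. by move=> a0 ab; rewrite ler_pXn2r // nnegrE; lra. Qed.

Lemma core (rr : nat -> R) : (forall k, (k <= 5)%N -> Fvalues M (rr k)) ->
  (forall i j, (i < j)%N -> (j <= 5)%N -> rr i < rr j) -> False.
Proof.
move=> HF Hinc.
have : forall k, exists sw : R * 'rV[R]_3, (k <= 5)%N ->
  [/\ 1/2 <= sw.1 < 1, lattice M sw.2, 0 <= ucoord sw.2 < sw.1, v_nonzero sw.2
     & vnorm sw.2 = rr k] /\
  (forall y, lattice M y -> 0 <= ucoord y < sw.1 -> v_nonzero y -> rr k <= vnorm y).
  move=> k; case: (leqP k 5) => hk.
    by have [s [w H]] := half (HF k hk); exists (s, w).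
  by exists (0, 0).
move/choice => [f Hf].
pose S k := (f k).1. pose W k := (f k).2.
have HS : forall k, (k <= 5)%N -> [/\ 1/2 <= S k < 1, lattice M (W k),
    0 <= ucoord (W k) < S k, v_nonzero (W k) & vnorm (W k) = rr k].
  by move=> k hk; have [H _] := Hf k hk.
have Hm : forall k y, (k <= 5)%N -> lattice M y -> 0 <= ucoord y < S k ->
    v_nonzero y -> rr k <= vnorm y.
  by move=> k y hk; have [_ H] := Hf k hk; apply: H.
have D1 : forall j k, (j < k)%N -> (k <= 5)%N -> S k <= ucoord (W j).
  move=> j k jk k5; have j5 : (j <= 5)%N by apply: ltnW; apply: leq_trans k5.
  have [_ Lj /andP[uj0 uj1] nzj vj] := HS j j5.
  rewrite leNgt; apply/negP => h.
  have := Hm k (W j) k5 Lj; rewrite uj0 h vj => /(_ isT nzj).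
  by have := Hinc j k jk k5; lra.
have [/andP[s50 s51] _ _ _ _] := HS 5%N isT.
have r0 : 0 < rr 0%N.
  by have [_ _ _ nz <-] := HS 0%N isT; apply: vnorm_gt0.
have rpos : forall k, (k <= 5)%N -> 0 < rr k.
  move=> k hk; case: k hk => // k hk.
  by have := Hinc 0%N k.+1 isT hk; lra.
have pairlt : forall i j, (i < j)%N -> (j <= 4)%N -> rr 5%N <= vnorm (W i - W j).
  move=> i j ij j4.
  have j5 : (j <= 5)%N by apply: leq_trans j4 _.
  have i5 : (i <= 5)%N by apply: ltnW; apply: leq_trans j5.
  have [/andP[si0 si1] Li /andP[ui0 ui1] nzi vi] := HS i i5.
  have [/andP[sj0 sj1] Lj /andP[uj0 uj1] nzj vj] := HS j j5.
  have h1 := D1 i j ij j5.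
  have h2 := D1 j 5%N (leq_ltn_trans j4 (ltnSn 4)) (leqnn 5).
  case: (vnz_dec (W i - W j)) => [nz|[z1 z2]].
    apply: Hm => //; first exact: lattice_sub.
    by rewrite uD uN; apply/andP; split; lra.
  exfalso.
  have e : vnorm (W i) = vnorm (W j).
    by apply: vnorm_eqV; move: z1 z2; rewrite V1D V1N V2D V2N => z1 z2; lra.
  by have := Hinc i j ij j5; lra.
apply: (@GL R (rr 5%N) (fun k => V1 (W k)) (fun k => V2 (W k)) rr r0).
- by have [_ _ _ _ <-] := HS 0%N isT; rewrite vnorm2.
- move=> k /andP[k0 k4].
  have k5 : (k <= 5)%N by apply: leq_trans k4 _.
  split.
  + exact: Hinc.
  + by apply: Hinc => //; apply: leq_ltn_trans k4 _.
  + by have [_ _ _ _ <-] := HS k k5; rewrite vnorm2.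
- move=> i j i4 j4 ij.
  case: (ltngtP i j) ij => // ij _.
    have := sq_le (ltW (rpos 5%N isT)) (pairlt i j ij j4).
    by rewrite vnorm2 V1D V1N V2D V2N.
  have := sq_le (ltW (rpos 5%N isT)) (pairlt j i ij i4).
  rewrite vnorm2 V1D V1N V2D V2N.
  have -> : (V1 (W j) + - V1 (W i)) ^+ 2 = (V1 (W i) - V1 (W j)) ^+ 2 by ring.
  by have -> : (V2 (W j) + - V2 (W i)) ^+ 2 = (V2 (W i) - V2 (W j)) ^+ 2 by ring.
- have tri : forall i j, (0 < i)%N -> (i < j)%N -> (j <= 4)%N ->
     (V1 (W i) + V1 (W j) - V1 (W 0%N) = 0 /\ V2 (W i) + V2 (W j) - V2 (W 0%N) = 0) \/
     (rr i ^+ 2 <= (V1 (W i) + V1 (W j) - V1 (W 0%N)) ^+ 2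
                  + (V2 (W i) + V2 (W j) - V2 (W 0%N)) ^+ 2 /\
      rr j ^+ 2 <= (V1 (W i) + V1 (W j) - V1 (W 0%N)) ^+ 2
                  + (V2 (W i) + V2 (W j) - V2 (W 0%N)) ^+ 2).
    move=> i j i0 ij j4.
    have j5 : (j <= 5)%N by apply: leq_trans j4 _.
    have i5 : (i <= 5)%N by apply: ltnW; apply: leq_trans j5.
    have [/andP[s00 s01] L0 /andP[u00 u01] nz0 v0] := HS 0%N isT.
    have [/andP[si0 si1] Li /andP[ui0 ui1] nzi vi] := HS i i5.
    have [/andP[sj0 sj1] Lj /andP[uj0 uj1] nzj vj] := HS j j5.
    have h1 := D1 0%N i i0 i5.
    have h2 := D1 i 5%N (leq_ltn_trans (ltnW (leq_trans ij j4)) (ltnSn 4)) (leqnn 5).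
    have h3 := D1 j 5%N (leq_ltn_trans j4 (ltnSn 4)) (leqnn 5).
    set y := W i + W j - W 0%N.
    have Ly : lattice M y by apply: lattice_sub => //; apply: lattice_add.
    case: (vnz_dec y) => [nz|[z1 z2]].
      right.
      have hy := Hm j y j5 Ly.
      have : rr j <= vnorm y.
        by apply: hy => //; rewrite /y !uD uN; apply/andP; split; lra.
      move=> hjy.
      have hij := Hinc i j ij j5.
      have := sq_le (ltW (rpos j j5)) hjy.
      have := sq_le (ltW (rpos i i5)) (ltW (lt_le_trans hij hjy)).
      by rewrite vnorm2 /y !V1D !V1N !V2D !V2N.
    left; move: z1 z2; rewrite /y !V1D !V1N !V2D !V2N => z1 z2; split; lra.
  move=> i j /andP[i0 i4] /andP[j0 j4] ij.
  case: (ltngtP i j) ij => // ij _; first exact: tri.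
  case: (tri j i j0 ij i4) => [[z1 z2]|[t1 t2]].
    by left; split; lra.
  right; rewrite [V1 (W i) + _]addrC [V2 (W i) + _]addrC; split => //.
Qed.

End Lat.

Local Open Scope card_scope.
Lemma fin6 (R : realType) (M : 'M[R]_3) (B : {fset R}) :
  [set` B] `<=` Fvalues M -> (#|` B| <= 5)%N.
Proof.
move=> BA; rewrite leqNgt; apply/negP => hB.
pose s := sort <=%O (enum_fset B).
have ss : sorted <%O s by rewrite /s sort_lt_sorted; exact: fset_uniq.
have hs : size s = #|` B| by rewrite /s size_sort.
apply: (@core R M (fun k => nth 0 s k)).
- move=> k hk; apply: BA => /=.
  have : nth 0 s k \in s by apply: mem_nth; rewrite hs; apply: leq_ltn_trans hB.
  by rewrite /s mem_sort.
- move=> i j ij j5.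
  apply: (sorted_ltn_nth lt_trans) => //; rewrite inE hs.
    by apply: leq_ltn_trans hB; apply: leq_trans (ltnW ij) j5.
  by apply: leq_ltn_trans hB.
Qed.


End Aux.
Import Aux.
Local Open Scope classical_set_scope.
Local Open Scope card_scope.

Theorem theorem5p1 (R : realType) (M : 'M[R]_3) :
  \det M = 1 -> Fvalues M #<= `I_5.
Proof.
move=> _.
have finA : finite_set (Fvalues M).
  apply: contrapT => inf.
  have [B BA hB] := infinite_set_fset 6 inf.
  by have := @fin6 R M B BA; rewrite leqNgt hB.
have /finite_setP [n An] := finA.
have hn : (n <= 5)%N.
  rewrite -(card_fset_set An); apply: (@fin6 R M) => x /=.
  by rewrite (in_fset_set finA) => /set_mem.
apply: (card_le_trans (proj1 (proj1 (card_eqPle _ _) An))).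
by rewrite card_le_II.
Qed.
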